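(* Let $\beta<0$, $G_\beta(u)=-u^\beta$, $L\in\mathbb{N}$, $d>0$ and $u_0\in\mathcal{P}_{L,d}$. For $\delta>0$ let $u_{0,\delta}=u_0\vee\delta$ and let $u_\delta$ be a solution of $\partial_tu=\Delta G_\beta(u)$, $u(0)=u_{0,\delta}$, with $\delta\le u_\delta\le\|u_{0,\delta}\|_\infty$. Then there exist $t^*=t^*(\beta,L,d)>0$ and $C=C(\beta,L,d)$ such that $|u_\delta(t_2,k)-u_\delta(t_1,k)|\le C|t_2-t_1|^{\frac1{1-\beta}}$ for all $t_1,t_2\in[0,t^*]$, $k\in\mathbb{Z}$, and all $\delta>0$.
   Context: $\Delta v(k)=v(k-1)-2v(k)+v(k+1)$. $\sigma_+(u,k,d)=\inf\{l>k:u(l)\ge d\}$; $\mathcal{P}_{L,d}=\{u\in\ell^\infty_+(\mathbb{Z}):\sup_k(\sigma_+(u,k,d)-k)\le L\}$. A solution: $u\in C^0([0,\infty);\ell^\infty_+(\mathbb{Z}))$ with the initial datum, each $u(\cdot,k)\in C^1((0,\infty);(0,\infty))$ satisfying the equation pointwise. *)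

(* Defs.v *)
From Stdlib Require Import Reals ZArith.
From Coquelicot Require Import Coquelicot.
Open Scope R_scope.

Definition zseq := Z -> R.

Definition dlap (v : zseq) (k : Z) : R :=
  v (k - 1)%Z - 2 * v k + v (k + 1)%Z.

Definition Gb (beta u : R) : R := - Rpower u beta.

Definition linf_plus (v : zseq) : Prop :=
  (forall k, 0 <= v k) /\ exists M, forall k, Rabs (v k) <= M.

(* sup norm ||v||_∞ = sup_k |v(k)| (finite for bounded v) *)
Definition supnorm (v : zseq) : R :=
  real (Lub_Rbar (fun x => exists k, x = Rabs (v k))).

(* P_{L,d}: sup_k (σ_+(u,k,d) - k) <= L, where σ_+(u,k,d) = inf{l>k : u(l) >= d}
   (inf ∅ = +∞); unfolded: for each k some l in (k, k+L] has u(l) >= d. *)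
Definition PLd (L : nat) (d : R) (u : zseq) : Prop :=
  linf_plus u /\
  forall k : Z, exists l : Z, (k < l)%Z /\ (l <= k + Z.of_nat L)%Z /\ d <= u l.

Definition hpow (x a : R) : R := if Rle_dec x 0 then 0 else Rpower x a.

Definition is_solution (beta : R) (v0 : zseq) (u : R -> zseq) : Prop :=
  (forall t, 0 <= t -> linf_plus (u t)) /\
  (forall t, 0 <= t -> forall eps, 0 < eps -> exists eta, 0 < eta /\
      forall s, 0 <= s -> Rabs (s - t) < eta ->
        forall k, Rabs (u s k - u t k) <= eps) /\
  (forall k, u 0 k = v0 k) /\
  (forall k t, 0 < t ->
      0 < u t k /\
      is_derive (fun s => u s k) t (dlap (fun j => Gb beta (u t j)) k) /\
      continuous (fun s => Derive (fun r => u r k) s) t).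

(* Main.v *)
Require Import Defs.
From Stdlib Require Import Reals ZArith Lra Lia Classical.
From Coquelicot Require Import Coquelicot.
Open Scope R_scope.

Lemma deriv_lim (f : R -> R) x df : is_derive f x df -> derivable_pt_lim f x (Derive f x).
Proof. intro H. rewrite (is_derive_unique f x df H). now apply is_derive_Reals. Qed.

Lemma mono_up (f : R -> R) a b M : a <= b ->
  (forall x, a <= x <= b -> exists df, is_derive f x df /\ df <= M) ->
  f b - f a <= M * (b - a).
Proof.
  intros Hab H. destruct (Req_dec a b) as [->|Hne].
  { replace (f b - f b) with 0 by ring. lra. }
  destruct (MVT_cor2 f (Derive f) a b) as [c [Hc1 Hc2]]; [lra| |].
  { intros c Hc. destruct (H c Hc) as [df [Hd _]]. exact (deriv_lim f c df Hd). }
  destruct (H c ltac:(lra)) as [df [Hd Hle]].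
  rewrite (is_derive_unique f c df Hd) in Hc1. rewrite Hc1.
  apply Rmult_le_compat_r; lra.
Qed.

Lemma cont_of_deriv (g : R -> R) x dg : is_derive g x dg -> continuity_pt g x.
Proof.
  intro H. apply continuity_pt_filterlim. exact (ex_derive_continuous (V:=R_NormedModule) g x (ex_intro _ dg H)).
Qed.

Lemma cross (g : R -> R) a b M : a <= b -> 0 <= M -> g a <= 0 ->
  (forall x, a <= x <= b -> exists dg, is_derive g x dg /\ (0 < g x -> dg <= M)) ->
  g b <= M * (b - a).
Proof.
  intros Hab HM Hga H.
  destruct (Rle_dec (g b) (M * (b - a))) as [ok|Hno]; [exact ok|exfalso].
  apply Rnot_le_lt in Hno.
  set (E := fun s => a <= s <= b /\ g s <= 0).
  assert (Hb : bound E) by (exists b; intros s [Hs _]; lra).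
  assert (Hne : exists x, E x) by (exists a; split; [lra|exact Hga]).
  destruct (completeness E Hb Hne) as [s0 [Hub Hlub]].
  assert (Has0 : a <= s0) by (apply Hub; split; [lra|exact Hga]).
  assert (Hs0b : s0 <= b) by (apply Hlub; intros s [Hs _]; lra).
  assert (Hg0 : g s0 <= 0).
  { destruct (Rle_dec (g s0) 0) as [ok|Hp]; [exact ok|exfalso].
    apply Rnot_le_lt in Hp.
    destruct (H s0 ltac:(lra)) as [dg [Hd _]].
    pose proof (cont_of_deriv g s0 dg Hd) as Hc.
    destruct (Hc (g s0) Hp) as [alp [Halp Hal]].
    assert (Hex : exists s, E s /\ s0 - alp < s).
    { apply NNPP. intro Hn.
      assert (s0 <= s0 - alp); [|lra].
      apply Hlub. intros s Hs. destruct (Rle_dec s (s0 - alp)) as [o|o]; [exact o|].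
      exfalso. apply Hn. exists s. split; [exact Hs|lra]. }
    destruct Hex as [s [[Hs1 Hs2] Hs3]].
    assert (s <= s0) by (apply Hub; split; assumption).
    destruct (Req_dec s s0) as [->|Hss]; [lra|].
    assert (Hd2 : R_dist (g s) (g s0) < g s0).
    { apply Hal. split. { split; [exact I|intro; apply Hss; auto]. }
      simpl. unfold Rdist. rewrite Rabs_left; lra. }
    simpl in Hd2; unfold Rdist in Hd2. apply Rabs_def2 in Hd2. lra. }
  assert (Hlt : s0 < b).
  { destruct (Req_dec s0 b) as [->|]; [|lra]. exfalso.
    assert (0 <= M * (b - a)) by (apply Rmult_le_pos; lra). lra. }
  destruct (MVT_cor2 g (Derive g) s0 b) as [c [Hc1 Hc2]]; [lra| |].
  { intros c Hc. destruct (H c ltac:(lra)) as [df [Hd _]]. exact (deriv_lim g c df Hd). }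
  destruct (H c ltac:(lra)) as [dg [Hd Hle]].
  rewrite (is_derive_unique g c dg Hd) in Hc1.
  assert (Hgc : 0 < g c).
  { destruct (Rlt_dec 0 (g c)) as [o|o]; [exact o|].
    assert (c <= s0) by (apply Hub; split; [lra|lra]). lra. }
  specialize (Hle Hgc).
  assert (dg * (b - s0) <= M * (b - s0)) by (apply Rmult_le_compat_r; lra).
  assert (M * (b - s0) <= M * (b - a)) by (apply Rmult_le_compat_l; lra).
  lra.
Qed.

Lemma exp_mono x y : x <= y -> exp x <= exp y.
Proof. intro H. destruct (Req_dec x y) as [->|]; [lra|]. left; apply exp_increasing; lra. Qed.

Lemma rp_pos x y : 0 < Rpower x y.
Proof. unfold Rpower; apply exp_pos. Qed.

Lemma rp_mono_pos x y a : 0 < x <= y -> 0 <= a -> Rpower x a <= Rpower y a.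
Proof. intros. apply Rle_Rpower_l; lra. Qed.

Lemma rp_mono_neg x y a : 0 < x <= y -> a <= 0 -> Rpower y a <= Rpower x a.
Proof.
  intros Hxy Ha. unfold Rpower. apply exp_mono.
  assert (ln x <= ln y). { destruct (Req_dec x y) as [->|]; [lra|]. left; apply ln_increasing; lra. }
  nra.
Qed.

Lemma rp_exp_small t a b : 0 < t <= 1 -> a <= b -> Rpower t b <= Rpower t a.
Proof.
  intros Ht Hab. unfold Rpower. apply exp_mono.
  assert (ln t <= 0). { rewrite <- ln_1. destruct (Req_dec t 1) as [->|]; [lra|]. left; apply ln_increasing; lra. }
  nra.
Qed.

Lemma rp_le1 t a : 0 < t <= 1 -> 0 <= a -> Rpower t a <= 1.
Proof.
  intros. rewrite <- (Rpower_O t) by lra. apply rp_exp_small; lra.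
Qed.

Lemma rp_ge1 t a : 0 < t <= 1 -> a <= 0 -> 1 <= Rpower t a.
Proof.
  intros. rewrite <- (Rpower_O t) at 1 by lra. apply rp_exp_small; lra.
Qed.

Lemma rp_inv x a : 0 < x -> a <> 0 -> Rpower (Rpower x (1/a)) a = x.
Proof.
  intros. rewrite Rpower_mult. replace (1 / a * a) with 1 by (field; auto).
  now apply Rpower_1.
Qed.

Lemma rp_inv2 x a : 0 < x -> a <> 0 -> Rpower (Rpower x a) (1/a) = x.
Proof.
  intros. rewrite Rpower_mult. replace (a * (1 / a)) with 1 by (field; auto).
  now apply Rpower_1.
Qed.

Lemma rp_mul x y a : 0 < x -> 0 < y -> Rpower (x * y) a = Rpower x a * Rpower y a.
Proof. intros. now rewrite Rpower_mult_distr. Qed.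

Lemma rp_split x a : 0 < x -> Rpower x a = x * Rpower x (a - 1).
Proof.
  intros. replace a with (1 + (a - 1)) at 1 by ring. rewrite Rpower_plus, Rpower_1; auto.
Qed.

Lemma subadd x y g : 0 < x -> 0 < y -> 0 < g < 1 ->
  Rpower (x + y) g <= Rpower x g + Rpower y g.
Proof.
  intros. rewrite (rp_split (x+y)), (rp_split x), (rp_split y) by lra.
  assert (Rpower (x + y) (g - 1) <= Rpower x (g - 1)) by (apply rp_mono_neg; lra).
  assert (Rpower (x + y) (g - 1) <= Rpower y (g - 1)) by (apply rp_mono_neg; lra).
  nra.
Qed.

Lemma rp_derive x a : 0 < x -> is_derive (fun t => Rpower t a) x (a * Rpower x (a - 1)).
Proof. intro. apply is_derive_Reals. now apply derivable_pt_lim_power. Qed.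

Lemma rp_lip x y beta eps : beta < 0 -> 0 < eps -> eps <= y -> y <= x ->
  Rpower y beta - Rpower x beta <= - beta * Rpower eps (beta - 1) * (x - y).
Proof.
  intros Hb He Hy Hyx.
  destruct (Req_dec x y) as [->|Hne]. { replace (Rpower y beta - Rpower y beta) with 0 by ring.
    assert (0 < Rpower eps (beta - 1)) by apply rp_pos. nra. }
  destruct (MVT_cor2 (fun t => Rpower t beta) (fun t => beta * Rpower t (beta - 1)) y x) as [c [Hc1 Hc2]]; [lra| |].
  { intros c Hc. apply derivable_pt_lim_power. lra. }
  assert (Rpower c (beta - 1) <= Rpower eps (beta - 1)) by (apply rp_mono_neg; lra).
  assert (0 < Rpower c (beta - 1)) by apply rp_pos.
  simpl in Hc1.
  assert (0 <= (- beta * (x - y)) * (Rpower eps (beta - 1) - Rpower c (beta - 1))) by (apply Rmult_le_pos; nra).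
  nra.
Qed.

Fixpoint ffirst (P : nat -> bool) (n : nat) : nat :=
  match n with
  | O => O
  | S n' => if P O then O else S (ffirst (fun m => P (S m)) n')
  end.

Lemma ffirst_min P n m : (m < ffirst P n)%nat -> P m = false.
Proof.
  revert P m. induction n as [|n IH]; intros P m H; simpl in H. { lia. }
  destruct (P O) eqn:E. { lia. }
  destruct m as [|m]; [exact E|]. apply (IH (fun m => P (S m))). lia.
Qed.

Lemma ffirst_true P n m : (m <= n)%nat -> P m = true -> P (ffirst P n) = true.
Proof.
  revert P m. induction n as [|n IH]; intros P m Hm H; simpl.
  { assert (m = O) by lia. subst. exact H. }
  destruct (P O) eqn:E. { exact E. }
  destruct m as [|m]. { congruence. }
  apply (IH (fun m => P (S m)) m). lia. exact H.
Qed.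

Lemma ffirst_le P n : (ffirst P n <= n)%nat.
Proof.
  revert P. induction n as [|n IH]; intros P; simpl. lia.
  destruct (P O). lia. specialize (IH (fun m => P (S m))). lia.
Qed.

Lemma ffirst_char P n m : (m <= n)%nat -> P m = true -> (forall k, (k < m)%nat -> P k = false) ->
  ffirst P n = m.
Proof.
  intros Hm Ht Hf.
  assert (H1 : P (ffirst P n) = true) by (apply (ffirst_true P n m); auto).
  destruct (Nat.lt_trichotomy (ffirst P n) m) as [Hl|[He|Hg]]; auto.
  - rewrite Hf in H1 by auto. discriminate.
  - rewrite (ffirst_min P n m) in Ht by auto. discriminate.
Qed.

Lemma nat_unbounded x : exists n : nat, x < INR n.
Proof.
  destruct (archimed x) as [H1 _].
  destruct (Z_lt_le_dec 0 (up x)) as [Hp|Hn].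
  - exists (Z.to_nat (up x)). rewrite INR_IZR_INZ, Z2Nat.id by lia. exact H1.
  - exists O. simpl. apply IZR_le in Hn. lra.
Qed.

Lemma pow2_ge n : INR n <= 2 ^ n.
Proof.
  induction n as [|n IH]. { simpl; lra. }
  rewrite S_INR. simpl. assert (1 <= 2 ^ n) by (apply pow_R1_Rle; lra). lra.
Qed.

Lemma le_geom x B : 0 <= B -> (forall m, x <= B / 2 ^ m) -> x <= 0.
Proof.
  intros HB H. destruct (Rle_dec x 0) as [o|Hx]; [exact o|exfalso]. apply Rnot_le_lt in Hx.
  destruct (nat_unbounded ((B + 1) / x)) as [N HN].
  specialize (H N). pose proof (pow2_ge N).
  assert (HN' : (B + 1) < x * INR N).
  { apply (Rmult_lt_compat_l x) in HN; [|lra]. field_simplify in HN; lra. }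
  assert (0 < 2 ^ N) by (apply pow_lt; lra).
  assert (x * 2 ^ N <= B). { apply (Rmult_le_compat_r (2 ^ N)) in H; [|lra]. field_simplify in H; lra. }
  nra.
Qed.

Definition Fv beta (x : Z -> R) k := dlap (fun j => Gb beta (x j)) k.

Lemma Fv_expand beta x k : Fv beta x k =
  2 * Rpower (x k) beta - Rpower (x (k-1)%Z) beta - Rpower (x (k+1)%Z) beta.
Proof. unfold Fv, dlap, Gb. ring. Qed.

Lemma neigh_bound beta eps a b D : beta < 0 -> 0 < eps -> eps <= a -> eps <= b -> 0 <= D -> b - a <= D ->
  Rpower a beta - Rpower b beta <= - beta * Rpower eps (beta - 1) * D.
Proof.
  intros. assert (0 < Rpower eps (beta - 1)) by apply rp_pos.
  assert (0 <= - beta * Rpower eps (beta - 1) * D) by (apply Rmult_le_pos; [nra|lra]).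
  destruct (Rle_dec b a).
  - assert (Rpower a beta <= Rpower b beta) by (apply rp_mono_neg; lra). nra.
  - pose proof (rp_lip b a beta eps ltac:(lra) ltac:(lra) ltac:(lra) ltac:(lra)).
    assert (- beta * Rpower eps (beta - 1) * (b - a) <= - beta * Rpower eps (beta - 1) * D) by (apply Rmult_le_compat_l; nra).
    lra.
Qed.

Lemma comparison beta eps tau T B (v phi : R -> Z -> R) :
  beta < 0 -> 0 < eps -> 0 < tau -> 0 <= B ->
  (forall j t, tau <= t <= T -> eps <= v t j /\ eps <= phi t j /\ phi t j - v t j <= B) ->
  (forall j t, tau <= t <= T -> is_derive (fun s => v s j) t (Fv beta (v t) j)) ->
  (forall j t, tau <= t <= T -> exists df, is_derive (fun s => phi s j) t df /\ df <= Fv beta (phi t) j) ->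
  (forall j, phi tau j <= v tau j) ->
  forall j t, tau <= t <= T -> phi t j <= v t j.
Proof.
  intros Hb He Ht HB Hbd Hv Hphi H0.
  set (Lam := - beta * Rpower eps (beta - 1)).
  assert (HL : 0 < Lam) by (unfold Lam; pose proof (rp_pos eps (beta - 1)); nra).
  set (h := / (4 * Lam)).
  assert (Hh : 0 < h) by (unfold h; apply Rinv_0_lt_compat; lra).
  assert (Inner : forall t0, tau <= t0 -> (forall j, phi t0 j <= v t0 j) ->
            forall m j s, t0 <= s <= T -> s <= t0 + h -> phi s j - v s j <= B / 2 ^ m).
  { intros t0 Ht0 Hin m. induction m as [|m IH]; intros j s Hs Hsh.
    { simpl. replace (B / 1) with B by field. apply Hbd; lra. }
    assert (Hp : 0 < 2 ^ m) by (apply pow_lt; lra).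
    assert (HBm : 0 <= B / 2 ^ m) by (apply Rdiv_le_0_compat; lra).
    pose proof (cross (fun s => phi s j - v s j) t0 s (2 * Lam * (B / 2 ^ m))) as Hc.
    simpl in Hc.
    assert (Hres : phi s j - v s j <= 2 * Lam * (B / 2 ^ m) * (s - t0)).
    { apply Hc; [lra|nra|specialize (Hin j); lra|].
      intros x Hx.
      destruct (Hphi j x ltac:(lra)) as [df [Hdf Hdfle]].
      exists (df - Fv beta (v x) j). split.
      { apply (is_derive_minus (fun s => phi s j) (fun s => v s j)); [exact Hdf|apply Hv; lra]. }
      intro Hpos.
      rewrite !Fv_expand in *.
      destruct (Hbd j x ltac:(lra)) as [Hv1 [Hp1 _]].
      assert (Rpower (phi x j) beta <= Rpower (v x j) beta) by (apply rp_mono_neg; lra).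
      destruct (Hbd (j-1)%Z x ltac:(lra)) as [Hv2 [Hp2 _]].
      destruct (Hbd (j+1)%Z x ltac:(lra)) as [Hv3 [Hp3 _]].
      pose proof (neigh_bound beta eps (v x (j-1)%Z) (phi x (j-1)%Z) (B / 2 ^ m) Hb He Hv2 Hp2 HBm
                   ltac:(apply IH; lra)).
      pose proof (neigh_bound beta eps (v x (j+1)%Z) (phi x (j+1)%Z) (B / 2 ^ m) Hb He Hv3 Hp3 HBm
                   ltac:(apply IH; lra)).
      fold Lam in H1, H2. lra. }
    assert (2 * Lam * (B / 2 ^ m) * (s - t0) <= 2 * Lam * (B / 2 ^ m) * h).
    { apply Rmult_le_compat_l; [nra|lra]. }
    replace (B / 2 ^ S m) with (2 * Lam * (B / 2 ^ m) * h).
    { lra. }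
    unfold h. simpl. field. split; lra. }
  assert (Outer : forall n j s, tau <= s <= T -> s <= tau + INR n * h -> phi s j <= v s j).
  { intro n. induction n as [|n IH]; intros j s Hs Hsn.
    { simpl in Hsn. replace s with tau by lra. apply H0. }
    destruct (Rle_dec s (tau + INR n * h)) as [Hle|Hgt]. { apply IH; lra. } apply Rnot_le_lt in Hgt.
    rewrite S_INR in Hsn.
    set (t0 := tau + INR n * h).
    assert (0 <= INR n) by apply pos_INR.
    assert (Hin : forall j, phi t0 j <= v t0 j) by (intro i; apply IH; unfold t0; nra).
    assert (Hall : forall m, phi s j - v s j <= B / 2 ^ m).
    { intro m. apply (Inner t0); [unfold t0; nra|exact Hin|unfold t0 in *; lra|unfold t0 in *; lra]. }
    pose proof (le_geom _ B HB Hall). lra. }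
  intros j t Htt.
  destruct (nat_unbounded ((t - tau) / h)) as [n Hn].
  apply (Outer n); [lra|].
  apply (Rmult_lt_compat_r h) in Hn; [|lra]. field_simplify in Hn; lra.
Qed.

Definition gg beta := 1 / (1 - beta).
Definition B0 beta d := Rpower (d / 2) beta.
Definition MM (L : nat) := 2 * INR L + 4.
Definition hh L (r : nat) := INR r * (MM L - INR r).
Definition Bmax beta L d := B0 beta d + d * MM L * MM L.
Definition Cp beta L d := 2 * Bmax beta L d / gg beta.
Definition tst beta L d := Rmin 1 (Rpower (d / (2 * Cp beta L d)) (1 / gg beta)).
Definition cc beta L d := Rpower (Bmax beta L d) (1 / beta).

Lemma gg_bounds beta : beta < 0 -> 0 < gg beta < 1.
Proof. intro. unfold gg. split. apply Rdiv_lt_0_compat; lra.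
  apply (Rmult_lt_reg_r (1 - beta)); [lra|]. field_simplify; lra. Qed.

Lemma gg_beta beta : beta < 0 -> gg beta * beta = gg beta - 1.
Proof. intro. unfold gg. field. lra. Qed.

Lemma B0_pos beta d : 0 < B0 beta d.
Proof. apply rp_pos. Qed.

Lemma MM_pos L : 4 <= MM L.
Proof. unfold MM. pose proof (pos_INR L). lra. Qed.

Lemma hh_bounds L r : (r <= S L)%nat -> 0 <= hh L r <= MM L * MM L.
Proof.
  intro H. unfold hh. apply le_INR in H. rewrite S_INR in H. pose proof (pos_INR r).
  unfold MM in *. pose proof (pos_INR L). split; nra.
Qed.

Lemma hh0 L : hh L 0 = 0.
Proof. unfold hh. simpl. ring. Qed.

Lemma hh_conc L r : (1 <= r)%nat -> 2 * hh L r - hh L (r - 1) - hh L (S r) = 2.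
Proof.
  intro H. unfold hh. rewrite minus_INR by lia. rewrite (S_INR r). change (INR 1) with 1. ring.
Qed.

Lemma Bmax_ge beta L d : 0 < d -> B0 beta d + d * MM L * MM L = Bmax beta L d /\ 0 < Bmax beta L d.
Proof. intros. split; [reflexivity|]. unfold Bmax. pose proof (B0_pos beta d). pose proof (MM_pos L).
  assert (0 <= d * MM L * MM L) by (apply Rmult_le_pos; [apply Rmult_le_pos|]; lra). lra. Qed.

Lemma Cp_pos beta L d : beta < 0 -> 0 < d -> 0 < Cp beta L d.
Proof. intros. unfold Cp. pose proof (gg_bounds beta H). pose proof (Bmax_ge beta L d H0).
  apply Rdiv_lt_0_compat; lra. Qed.

Lemma tst_pos beta L d : beta < 0 -> 0 < d -> 0 < tst beta L d <= 1.
Proof. intros. unfold tst. split. apply Rmin_glb_lt; [lra|apply rp_pos]. apply Rmin_l. Qed.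

Lemma tst_prop beta L d t : beta < 0 -> 0 < d -> 0 < t <= tst beta L d ->
  Cp beta L d * Rpower t (gg beta) <= d / 2.
Proof.
  intros Hb Hd Ht. pose proof (gg_bounds beta Hb). pose proof (Cp_pos beta L d Hb Hd).
  assert (Rpower t (gg beta) <= d / (2 * Cp beta L d)).
  { rewrite <- (rp_inv (d / (2 * Cp beta L d)) (gg beta)).
    - apply rp_mono_pos; [|lra]. split; [lra|]. unfold tst in Ht. pose proof (Rmin_r 1 (Rpower (d / (2 * Cp beta L d)) (1 / gg beta))). lra.
    - apply Rdiv_lt_0_compat; lra.
    - lra. }
  apply (Rmult_le_compat_l (Cp beta L d)) in H1; [|lra].
  replace (Cp beta L d * (d / (2 * Cp beta L d))) with (d/2) in H1 by (field; lra). exact H1.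
Qed.

Lemma cc_le beta L d : beta < 0 -> 0 < d -> 0 < cc beta L d <= d / 2.
Proof.
  intros Hb Hd. split; [apply rp_pos|]. unfold cc.
  rewrite <- (rp_inv2 (d/2) beta) by lra. fold (B0 beta d).
  apply rp_mono_neg. { split. apply B0_pos. destruct (Bmax_ge beta L d Hd) as [<- _].
    pose proof (MM_pos L). assert (0 <= d * MM L * MM L) by (apply Rmult_le_pos; [apply Rmult_le_pos|]; lra). lra. }
  unfold Rdiv; rewrite Rmult_1_l; left; apply Rinv_lt_0_compat; lra.
Qed.

Definition isd d (u0 : zseq) j : bool := if Rle_dec d (u0 j) then true else false.
Definition rr L d u0 j := ffirst (fun m => isd d u0 (j + Z.of_nat m)%Z) L.

Lemma isd_true d u0 j : isd d u0 j = true <-> d <= u0 j.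
Proof. unfold isd. destruct (Rle_dec d (u0 j)); split; intros; auto; try discriminate; contradiction. Qed.

Lemma rr_le L d u0 j : (rr L d u0 j <= L)%nat.
Proof. apply ffirst_le. Qed.

Lemma rr_d L d u0 j : d <= u0 j -> rr L d u0 j = O.
Proof.
  intro H. apply ffirst_char. lia. simpl. rewrite Z.add_0_r. now apply isd_true. intros; lia.
Qed.

Lemma rr_nd L d u0 j : PLd L d u0 -> ~ d <= u0 j ->
  (1 <= rr L d u0 j)%nat /\ rr L d u0 (j + 1)%Z = (rr L d u0 j - 1)%nat.
Proof.
  intros [_ HP] Hn. destruct (HP j) as [l [H1 [H2 H3]]].
  set (P := fun m => isd d u0 (j + Z.of_nat m)%Z).
  assert (HPl : P (Z.to_nat (l - j)) = true).
  { unfold P. rewrite Z2Nat.id by lia. replace (j + (l - j))%Z with l by lia. now apply isd_true. }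
  assert (Ht : P (rr L d u0 j) = true).
  { apply (ffirst_true P L (Z.to_nat (l - j))); [lia|exact HPl]. }
  assert (H0 : P O = false).
  { unfold P. simpl. rewrite Z.add_0_r. unfold isd. destruct (Rle_dec d (u0 j)); [contradiction|reflexivity]. }
  assert (Hr1 : (1 <= rr L d u0 j)%nat).
  { destruct (rr L d u0 j) eqn:E; [|lia]. congruence. }
  split; [exact Hr1|].
  unfold rr at 1. apply ffirst_char.
  - pose proof (rr_le L d u0 j). lia.
  - unfold P in Ht. replace (j + 1 + Z.of_nat (rr L d u0 j - 1))%Z with (j + Z.of_nat (rr L d u0 j))%Z by lia.
    exact Ht.
  - intros k Hk. pose proof (ffirst_min P L (S k) ltac:(change (rr L d u0 j) with (ffirst P L) in Hk; lia)) as Hm.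
    unfold P in Hm. replace (j + 1 + Z.of_nat k)%Z with (j + Z.of_nat (S k))%Z by lia. exact Hm.
Qed.

Lemma rr_prev L d u0 j : PLd L d u0 -> ~ d <= u0 j ->
  hh L (rr L d u0 (j - 1)%Z) <= hh L (S (rr L d u0 j)).
Proof.
  intros HP Hn.
  assert (Hb : (S (rr L d u0 j) <= S L)%nat) by (pose proof (rr_le L d u0 j); lia).
  destruct (Rle_dec d (u0 (j - 1)%Z)) as [Hd|Hnd].
  - rewrite (rr_d L d u0 _ Hd), hh0. apply hh_bounds; exact Hb.
  - destruct (rr_nd L d u0 (j-1)%Z HP Hnd) as [H1 H2].
    replace (j - 1 + 1)%Z with j in H2 by lia.
    replace (rr L d u0 (j - 1)%Z) with (S (rr L d u0 j)) by lia. lra.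
Qed.

Definition bj beta L d u0 j := B0 beta d + d * hh L (rr L d u0 j).
Definition aj beta L d u0 j := Rpower (bj beta L d u0 j) (1 / beta).
Definition phi beta L d (u0 : zseq) (t : R) (j : Z) : R :=
  if Rle_dec d (u0 j) then d - Cp beta L d * Rpower t (gg beta)
  else aj beta L d u0 j * Rpower t (gg beta).

Lemma bj_bounds beta L d u0 j : 0 < d -> B0 beta d <= bj beta L d u0 j <= Bmax beta L d.
Proof.
  intro Hd. unfold bj. destruct (Bmax_ge beta L d Hd) as [<- _].
  pose proof (hh_bounds L (rr L d u0 j) ltac:(pose proof (rr_le L d u0 j); lia)).
  split; nra.
Qed.

Lemma bj_pos beta L d u0 j : 0 < d -> 0 < bj beta L d u0 j.
Proof. intro. pose proof (bj_bounds beta L d u0 j H). pose proof (B0_pos beta d). lra. Qed.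

Lemma inv_neg beta : beta < 0 -> 1 / beta <= 0.
Proof. intro. unfold Rdiv; rewrite Rmult_1_l; left; apply Rinv_lt_0_compat; lra. Qed.

Lemma aj_bounds beta L d u0 j : beta < 0 -> 0 < d -> cc beta L d <= aj beta L d u0 j <= d / 2.
Proof.
  intros Hb Hd. pose proof (bj_bounds beta L d u0 j Hd). pose proof (B0_pos beta d).
  unfold aj, cc. split.
  - apply rp_mono_neg; [lra|now apply inv_neg].
  - rewrite <- (rp_inv2 (d/2) beta) by lra. fold (B0 beta d).
    apply rp_mono_neg; [lra|now apply inv_neg].
Qed.

Lemma aj_pow beta L d u0 j : beta < 0 -> 0 < d -> Rpower (aj beta L d u0 j) beta = bj beta L d u0 j.
Proof. intros. unfold aj. apply rp_inv. now apply bj_pos. lra. Qed.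

Lemma tpow beta t a : beta < 0 -> 0 < t -> Rpower (a * Rpower t (gg beta)) beta = Rpower a beta * Rpower t (gg beta - 1)
  \/ a <= 0.
Proof.
  intros Hb Ht. destruct (Rle_dec a 0) as [|Ha]; [right; auto|left].
  rewrite rp_mul by (try lra; apply rp_pos). rewrite Rpower_mult, gg_beta by lra. reflexivity.
Qed.

Lemma phi_d beta L d u0 t j : beta < 0 -> 0 < d -> 0 < t <= tst beta L d -> d <= u0 j ->
  phi beta L d u0 t j = d - Cp beta L d * Rpower t (gg beta) /\
  d / 2 <= phi beta L d u0 t j <= d.
Proof.
  intros Hb Hd Ht Hj. unfold phi. destruct (Rle_dec d (u0 j)); [|contradiction].
  split; [reflexivity|].
  pose proof (tst_prop beta L d t Hb Hd Ht). pose proof (Cp_pos beta L d Hb Hd).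
  pose proof (rp_pos t (gg beta)). nra.
Qed.

Lemma phi_nd beta L d u0 t j : beta < 0 -> 0 < d -> 0 < t -> ~ d <= u0 j ->
  phi beta L d u0 t j = aj beta L d u0 j * Rpower t (gg beta) /\
  Rpower (phi beta L d u0 t j) beta = bj beta L d u0 j * Rpower t (gg beta - 1).
Proof.
  intros Hb Hd Ht Hj. unfold phi. destruct (Rle_dec d (u0 j)); [contradiction|].
  split; [reflexivity|].
  destruct (tpow beta t (aj beta L d u0 j) Hb Ht) as [->|Hc].
  - now rewrite aj_pow.
  - exfalso. unfold aj in Hc. pose proof (rp_pos (bj beta L d u0 j) (1/beta)). lra.
Qed.

Lemma tg1 beta t : beta < 0 -> 0 < t <= 1 -> 1 <= Rpower t (gg beta - 1).
Proof. intros. apply rp_ge1; auto. pose proof (gg_bounds beta H). lra. Qed.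

Lemma phi_pow_le beta L d u0 t i : beta < 0 -> 0 < d -> 0 < t <= tst beta L d ->
  Rpower (phi beta L d u0 t i) beta <= bj beta L d u0 i * Rpower t (gg beta - 1).
Proof.
  intros Hb Hd Ht. pose proof (tst_pos beta L d Hb Hd).
  destruct (Rle_dec d (u0 i)) as [Hi|Hi].
  - destruct (phi_d beta L d u0 t i Hb Hd Ht Hi) as [_ Hp].
    assert (Rpower (phi beta L d u0 t i) beta <= B0 beta d) by (apply rp_mono_neg; lra).
    unfold bj. rewrite (rr_d L d u0 i Hi), hh0.
    pose proof (tg1 beta t Hb ltac:(lra)). pose proof (B0_pos beta d). nra.
  - destruct (phi_nd beta L d u0 t i Hb Hd ltac:(lra) Hi) as [_ ->]. lra.
Qed.

Lemma phi_lower beta L d u0 t j : beta < 0 -> 0 < d -> 0 < t <= tst beta L d ->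
  cc beta L d * Rpower t (gg beta) <= phi beta L d u0 t j.
Proof.
  intros Hb Hd Ht. pose proof (tst_pos beta L d Hb Hd). pose proof (cc_le beta L d Hb Hd).
  pose proof (gg_bounds beta Hb). pose proof (rp_pos t (gg beta)).
  destruct (Rle_dec d (u0 j)) as [Hi|Hi].
  - destruct (phi_d beta L d u0 t j Hb Hd Ht Hi) as [_ Hp].
    assert (Rpower t (gg beta) <= 1) by (apply rp_le1; lra). nra.
  - destruct (phi_nd beta L d u0 t j Hb Hd ltac:(lra) Hi) as [-> _].
    pose proof (aj_bounds beta L d u0 j Hb Hd). nra.
Qed.

Lemma phi_upper beta L d u0 t j : beta < 0 -> 0 < d -> 0 < t <= tst beta L d ->
  phi beta L d u0 t j <= d.
Proof.
  intros Hb Hd Ht. pose proof (tst_pos beta L d Hb Hd).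
  pose proof (gg_bounds beta Hb). pose proof (rp_pos t (gg beta)).
  destruct (Rle_dec d (u0 j)) as [Hi|Hi].
  - destruct (phi_d beta L d u0 t j Hb Hd Ht Hi) as [_ Hp]. lra.
  - destruct (phi_nd beta L d u0 t j Hb Hd ltac:(lra) Hi) as [-> _].
    pose proof (aj_bounds beta L d u0 j Hb Hd).
    assert (Rpower t (gg beta) <= 1) by (apply rp_le1; lra). nra.
Qed.

Lemma phi_sub beta L d u0 t j : beta < 0 -> 0 < d -> PLd L d u0 -> 0 < t <= tst beta L d ->
  exists df, is_derive (fun s => phi beta L d u0 s j) t df /\ df <= Fv beta (phi beta L d u0 t) j.
Proof.
  intros Hb Hd HP Ht. pose proof (gg_bounds beta Hb) as Hg.
  pose proof (rp_pos t (gg beta - 1)) as Htp.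
  pose proof (phi_pow_le beta L d u0 t (j-1)%Z Hb Hd Ht) as Hm.
  pose proof (phi_pow_le beta L d u0 t (j+1)%Z Hb Hd Ht) as Hp.
  rewrite Fv_expand.
  unfold phi at 1. destruct (Rle_dec d (u0 j)) as [Hj|Hj].
  - eexists. split.
    { apply (is_derive_minus (fun _ => d) (fun s => Cp beta L d * Rpower s (gg beta))). apply is_derive_const. apply (is_derive_scal (fun s => Rpower s (gg beta))). apply rp_derive. lra. }
    unfold minus, plus, opp, zero; simpl.
    pose proof (bj_bounds beta L d u0 (j-1)%Z Hd). pose proof (bj_bounds beta L d u0 (j+1)%Z Hd).
    pose proof (rp_pos (phi beta L d u0 t j) beta).
    assert (E : Cp beta L d * (gg beta * Rpower t (gg beta - 1)) = 2 * Bmax beta L d * Rpower t (gg beta - 1)).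
    { unfold Cp. field. lra. }
    rewrite E.
    assert (bj beta L d u0 (j - 1)%Z * Rpower t (gg beta - 1) <= Bmax beta L d * Rpower t (gg beta - 1)) by nra.
    assert (bj beta L d u0 (j + 1)%Z * Rpower t (gg beta - 1) <= Bmax beta L d * Rpower t (gg beta - 1)) by nra.
    lra.
  - eexists. split.
    { apply (is_derive_scal (fun s => Rpower s (gg beta))). apply rp_derive. lra. }
    simpl.
    destruct (phi_nd beta L d u0 t j Hb Hd ltac:(lra) Hj) as [_ Hpj]. rewrite Hpj.
    pose proof (aj_bounds beta L d u0 j Hb Hd) as Ha.
    pose proof (cc_le beta L d Hb Hd).
    destruct (rr_nd L d u0 j HP Hj) as [Hr1 Hr2].
    pose proof (rr_prev L d u0 j HP Hj) as Hprev.
    pose proof (hh_conc L (rr L d u0 j) Hr1) as Hc.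
    assert (Hbb : 2 * d <= 2 * bj beta L d u0 j - bj beta L d u0 (j - 1)%Z - bj beta L d u0 (j + 1)%Z).
    { unfold bj. rewrite Hr2. nra. }
    assert (aj beta L d u0 j * (gg beta * Rpower t (gg beta - 1)) <= 2 * d * Rpower t (gg beta - 1)).
    { assert (aj beta L d u0 j * gg beta <= 2 * d) by nra. nra. }
    assert (2 * d * Rpower t (gg beta - 1) <= (2 * bj beta L d u0 j - bj beta L d u0 (j - 1)%Z - bj beta L d u0 (j + 1)%Z) * Rpower t (gg beta - 1)) by nra.
    lra.
Qed.

Lemma lim0_lo (f : R -> R) t A : 0 < t ->
  (forall eps, 0 < eps -> exists s, 0 < s < t /\ Rabs (f s - f 0) <= eps) ->
  (forall s, 0 < s < t -> A <= f t - f s) -> A <= f t - f 0.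
Proof.
  intros Ht Hc H. destruct (Rle_dec A (f t - f 0)) as [o|Hn]; [exact o|exfalso].
  apply Rnot_le_lt in Hn.
  destruct (Hc ((A - (f t - f 0)) / 2) ltac:(lra)) as [s [Hs Hab]].
  specialize (H s Hs). apply Rabs_le_between in Hab. lra.
Qed.

Lemma lim0_hi (f : R -> R) t A : 0 < t ->
  (forall eps, 0 < eps -> exists s, 0 < s < t /\ Rabs (f s - f 0) <= eps) ->
  (forall s, 0 < s < t -> f t - f s <= A) -> f t - f 0 <= A.
Proof.
  intros Ht Hc H. destruct (Rle_dec (f t - f 0) A) as [o|Hn]; [exact o|exfalso].
  apply Rnot_le_lt in Hn.
  destruct (Hc ((f t - f 0 - A) / 2) ltac:(lra)) as [s [Hs Hab]].
  specialize (H s Hs). apply Rabs_le_between in Hab. lra.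
Qed.

Lemma sol_deriv beta v0 u k t : is_solution beta v0 u -> 0 < t ->
  is_derive (fun s => u s k) t (Fv beta (u t) k).
Proof. intros [_ [_ [_ H]]] Ht. apply (H k t Ht). Qed.

Lemma sol_cont0 beta v0 u k t : is_solution beta v0 u -> 0 < t ->
  forall eps, 0 < eps -> exists s, 0 < s < t /\ Rabs (u s k - u 0 k) <= eps.
Proof.
  intros [_ [H _]] Ht eps He. destruct (H 0 (Rle_refl 0) eps He) as [eta [Heta Hc]].
  exists (Rmin (t/2) (eta/2)). split.
  - split. apply Rmin_glb_lt; lra. pose proof (Rmin_l (t/2) (eta/2)). lra.
  - apply Hc. apply Rmin_glb; lra. rewrite Rminus_0_r. rewrite Rabs_right.
    pose proof (Rmin_r (t/2) (eta/2)). lra. apply Rle_ge, Rmin_glb; lra.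
Qed.

Lemma small_pow a e : 0 < e -> 0 < a -> exists t0, 0 < t0 /\ forall t, 0 < t <= t0 -> Rpower t a <= e.
Proof.
  intros He Ha. exists (Rpower e (1/a)). split; [apply rp_pos|].
  intros t Ht. rewrite <- (rp_inv e a) by lra. apply rp_mono_pos; lra.
Qed.

Lemma q_le beta x delta : beta < 0 -> 0 < delta -> delta <= x -> Rpower x beta <= Rpower delta beta.
Proof. intros. apply rp_mono_neg; lra. Qed.

Lemma dsite_init beta (u0 : zseq) delta u d j tau :
  beta < 0 -> 0 < delta -> 0 < tau ->
  is_solution beta (fun k => Rmax (u0 k) delta) u ->
  (forall t k, 0 <= t -> delta <= u t k) ->
  d <= u0 j -> d - 2 * Rpower delta beta * tau <= u tau j.
Proof.
  intros Hb Hdl Ht Hs Hbd Hj.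
  assert (H0 : u 0 j = Rmax (u0 j) delta) by (destruct Hs as [_ [_ [H _]]]; apply H).
  assert (Hu0 : d <= u 0 j) by (rewrite H0; pose proof (Rmax_l (u0 j) delta); lra).
  pose proof (rp_pos delta beta).
  assert (2 * Rpower delta beta * tau * -1 <= u tau j - u 0 j); [|lra].
  apply (lim0_lo (fun s => u s j) tau); [exact Ht|apply (sol_cont0 beta _ u j tau Hs Ht)|].
  intros s Hs'.
  pose proof (mono_up (fun x => - u x j) s tau (2 * Rpower delta beta) ltac:(lra)) as Hm.
  assert (- u tau j - - u s j <= 2 * Rpower delta beta * (tau - s)); [|nra].
  apply Hm. intros x Hx. exists (- Fv beta (u x) j). split.
  { apply (is_derive_opp (fun x => u x j)). apply (sol_deriv beta _ u j x Hs). lra. }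
  rewrite Fv_expand.
  pose proof (rp_pos (u x j) beta).
  pose proof (q_le beta (u x (j-1)%Z) delta Hb Hdl (Hbd x _ ltac:(lra))).
  pose proof (q_le beta (u x (j+1)%Z) delta Hb Hdl (Hbd x _ ltac:(lra))).
  lra.
Qed.

Lemma lower_bound beta L d (u0 : zseq) delta u :
  beta < 0 -> 0 < d -> PLd L d u0 -> 0 < delta ->
  is_solution beta (fun k => Rmax (u0 k) delta) u ->
  (forall t k, 0 <= t -> delta <= u t k) ->
  forall j t, 0 < t <= tst beta L d -> cc beta L d * Rpower t (gg beta) <= u t j.
Proof.
  intros Hb Hd HP Hdl Hs Hbd.
  pose proof (gg_bounds beta Hb) as Hg. pose proof (tst_pos beta L d Hb Hd) as Hts.
  pose proof (cc_le beta L d Hb Hd) as Hcc. pose proof (Cp_pos beta L d Hb Hd) as HCp.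
  pose proof (rp_pos delta beta) as Hdb.
  destruct (small_pow (gg beta) (2 * delta / d) ltac:(apply Rdiv_lt_0_compat; lra) ltac:(lra)) as [t1 [Ht1 Hp1]].
  destruct (small_pow (1 - gg beta) (Cp beta L d / (2 * Rpower delta beta)) ltac:(apply Rdiv_lt_0_compat; lra) ltac:(lra)) as [t2 [Ht2 Hp2]].
  set (tau := Rmin (tst beta L d) (Rmin t1 t2)).
  assert (Htau : 0 < tau <= tst beta L d).
  { unfold tau. split. apply Rmin_glb_lt; [lra|apply Rmin_glb_lt; lra]. apply Rmin_l. }
  assert (Htau1 : tau <= t1) by (unfold tau; pose proof (Rmin_r (tst beta L d) (Rmin t1 t2)); pose proof (Rmin_l t1 t2); lra).
  assert (Htau2 : tau <= t2) by (unfold tau; pose proof (Rmin_r (tst beta L d) (Rmin t1 t2)); pose proof (Rmin_r t1 t2); lra).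
  pose proof (rp_pos tau (gg beta)) as Htg.
  assert (Hdt : d / 2 * Rpower tau (gg beta) <= delta).
  { specialize (Hp1 tau ltac:(lra)).
    apply (Rmult_le_compat_l (d/2)) in Hp1; [|lra].
    replace (d / 2 * (2 * delta / d)) with delta in Hp1 by (field; lra). exact Hp1. }
  assert (Hdt2 : 2 * Rpower delta beta * tau <= Cp beta L d * Rpower tau (gg beta)).
  { specialize (Hp2 tau ltac:(lra)).
    assert (E : tau = Rpower tau (1 - gg beta) * Rpower tau (gg beta)).
    { rewrite <- Rpower_plus. replace (1 - gg beta + gg beta) with 1 by ring. now rewrite Rpower_1 by lra. }
    rewrite E at 1.
    apply (Rmult_le_compat_l (2 * Rpower delta beta)) in Hp2; [|lra].
    replace (2 * Rpower delta beta * (Cp beta L d / (2 * Rpower delta beta))) with (Cp beta L d) in Hp2 by (field; lra).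
    nra. }
  assert (Hcmp : forall j t, tau <= t <= tst beta L d -> phi beta L d u0 t j <= u t j).
  { apply (comparison beta (cc beta L d * Rpower tau (gg beta)) tau (tst beta L d) d u (phi beta L d u0));
      try lra.
    - apply Rmult_lt_0_compat; lra.
    - intros j t Ht. split; [|split].
      + pose proof (Hbd t j ltac:(lra)). nra.
      + pose proof (phi_lower beta L d u0 t j Hb Hd ltac:(lra)).
        assert (Rpower tau (gg beta) <= Rpower t (gg beta)) by (apply rp_mono_pos; lra). nra.
      + pose proof (phi_upper beta L d u0 t j Hb Hd ltac:(lra)). pose proof (Hbd t j ltac:(lra)). lra.
    - intros j t Ht. apply sol_deriv with (v0 := fun k => Rmax (u0 k) delta); [exact Hs|lra].
    - intros j t Ht. apply phi_sub; auto. lra.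
    - intro j. destruct (Rle_dec d (u0 j)) as [Hj|Hj].
      + destruct (phi_d beta L d u0 tau j Hb Hd Htau Hj) as [-> _].
        pose proof (dsite_init beta u0 delta u d j tau Hb Hdl ltac:(lra) Hs Hbd Hj). lra.
      + destruct (phi_nd beta L d u0 tau j Hb Hd ltac:(lra) Hj) as [-> _].
        pose proof (aj_bounds beta L d u0 j Hb Hd). pose proof (Hbd tau j ltac:(lra)). nra. }
  intros j t Ht.
  destruct (Rle_dec tau t) as [Hle|Hlt].
  - pose proof (Hcmp j t ltac:(lra)). pose proof (phi_lower beta L d u0 t j Hb Hd Ht). lra.
  - assert (Rpower t (gg beta) <= Rpower tau (gg beta)) by (apply rp_mono_pos; lra).
    pose proof (Hbd t j ltac:(lra)). nra.
Qed.

Definition Kl beta L d := 2 * Bmax beta L d / gg beta.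
Definition Ku beta := Rpower (2 * (1 - beta)) (gg beta).

Lemma up_pos beta (u0 : zseq) delta u k a b :
  beta < 0 -> 0 < delta ->
  is_solution beta (fun k => Rmax (u0 k) delta) u ->
  (forall t k, 0 <= t -> delta <= u t k) ->
  0 < a < b -> u b k - u a k <= Ku beta * Rpower (b - a) (gg beta).
Proof.
  intros Hb Hdl Hs Hbd Hab. set (p := 1 - beta).
  assert (Hp : 1 < p) by (unfold p; lra).
  assert (Hm : Rpower (u b k) p - Rpower (u a k) p <= 2 * p * (b - a)).
  { apply (mono_up (fun s => Rpower (u s k) p)); [lra|].
    intros x Hx. pose proof (Hbd x k ltac:(lra)) as Hux.
    pose proof (is_derive_comp (fun y => Rpower y p) (fun s => u s k) x _ _
      (rp_derive (u x k) p ltac:(lra)) (sol_deriv beta _ u k x Hs ltac:(lra))) as Hd.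
    eexists. split. { exact Hd. }
    simpl. unfold mult; simpl.
    rewrite Fv_expand.
    pose proof (rp_pos (u x (k-1)%Z) beta). pose proof (rp_pos (u x (k+1)%Z) beta).
    pose proof (rp_pos (u x k) (p - 1)).
    assert (E : Rpower (u x k) beta * Rpower (u x k) (p - 1) = 1).
    { rewrite <- Rpower_plus. replace (beta + (p - 1)) with 0 by (unfold p; ring). apply Rpower_O; lra. }
    match goal with |- scal ?a ?b <= _ => change (scal a b) with (a * b) end.
    assert (0 < p * Rpower (u x k) (p - 1)) by nra.
    assert (0 <= (Rpower (u x (k - 1)%Z) beta + Rpower (u x (k + 1)%Z) beta) * (p * Rpower (u x k) (p - 1))) by nra.
    nra. }
  assert (Hua : 0 < u a k) by (pose proof (Hbd a k ltac:(lra)); lra).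
  assert (Hub : 0 < u b k) by (pose proof (Hbd b k ltac:(lra)); lra).
  pose proof (gg_bounds beta Hb) as Hg.
  assert (u b k <= Rpower (Rpower (u a k) p + 2 * p * (b - a)) (gg beta)).
  { rewrite <- (rp_inv2 (u b k) p) by (unfold p; lra). unfold gg. fold p.
    apply rp_mono_pos; [|unfold p; fold (gg beta); lra].
    split; [apply rp_pos|lra]. }
  pose proof (subadd (Rpower (u a k) p) (2 * p * (b - a)) (gg beta) (rp_pos _ _) ltac:(nra) Hg).
  rewrite rp_mul in H0 by nra.
  replace (Rpower (Rpower (u a k) p) (gg beta)) with (u a k) in H0
    by (unfold gg; fold p; rewrite rp_inv2; auto; lra).
  unfold Ku. fold p. lra.
Qed.

Lemma lo_pos beta L d (u0 : zseq) delta u k a b :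
  beta < 0 -> 0 < d -> PLd L d u0 -> 0 < delta ->
  is_solution beta (fun k => Rmax (u0 k) delta) u ->
  (forall t k, 0 <= t -> delta <= u t k) ->
  0 < a < b -> b <= tst beta L d -> - Kl beta L d * Rpower (b - a) (gg beta) <= u b k - u a k.
Proof.
  intros Hb Hd HP Hdl Hs Hbd Hab Hbt.
  pose proof (gg_bounds beta Hb) as Hg.
  pose proof (Bmax_ge beta L d Hd) as [_ HBm].
  assert (Hm : (- (u b k + Kl beta L d * Rpower b (gg beta))) - (- (u a k + Kl beta L d * Rpower a (gg beta))) <= 0 * (b - a)).
  { apply (mono_up (fun s => - (u s k + Kl beta L d * Rpower s (gg beta)))); [lra|].
    intros x Hx.
    eexists. split.
    { apply (is_derive_opp (fun s => u s k + Kl beta L d * Rpower s (gg beta))).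
      apply (is_derive_plus (fun s => u s k) (fun s => Kl beta L d * Rpower s (gg beta))).
      apply (sol_deriv beta _ u k x Hs). lra.
      apply (is_derive_scal (fun s => Rpower s (gg beta))). apply rp_derive. lra. }
    simpl. unfold plus, opp; simpl.
    rewrite Fv_expand.
    assert (Hq : forall i, Rpower (u x i) beta <= Bmax beta L d * Rpower x (gg beta - 1)).
    { intro i. pose proof (lower_bound beta L d u0 delta u Hb Hd HP Hdl Hs Hbd i x ltac:(lra)) as Hl.
      pose proof (cc_le beta L d Hb Hd).
      assert (Rpower (u x i) beta <= Rpower (cc beta L d * Rpower x (gg beta)) beta).
      { apply rp_mono_neg; [|lra]. split; [|exact Hl]. apply Rmult_lt_0_compat; [lra|apply rp_pos]. }
      destruct (tpow beta x (cc beta L d) Hb ltac:(lra)) as [E|E]; [|lra].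
      rewrite E in H0. unfold cc in H0. rewrite rp_inv in H0 by lra. exact H0. }
    pose proof (Hq (k-1)%Z). pose proof (Hq (k+1)%Z). pose proof (rp_pos (u x k) beta).
    assert (E : Kl beta L d * (gg beta * Rpower x (gg beta - 1)) = 2 * Bmax beta L d * Rpower x (gg beta - 1)).
    { unfold Kl. field. lra. }
    rewrite E. lra. }
  pose proof (subadd (b - a) a (gg beta) ltac:(lra) ltac:(lra) Hg).
  replace (b - a + a) with b in H by ring.
  assert (0 < Kl beta L d) by (unfold Kl; apply Rdiv_lt_0_compat; lra).
  nra.
Qed.

Lemma holder beta L d (u0 : zseq) delta u k a b :
  beta < 0 -> 0 < d -> PLd L d u0 -> 0 < delta ->
  is_solution beta (fun k => Rmax (u0 k) delta) u ->
  (forall t k, 0 <= t -> delta <= u t k) ->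
  0 <= a < b -> b <= tst beta L d ->
  Rabs (u b k - u a k) <= (Ku beta + Kl beta L d) * Rpower (b - a) (gg beta).
Proof.
  intros Hb Hd HP Hdl Hs Hbd Hab Hbt.
  pose proof (gg_bounds beta Hb) as Hg.
  pose proof (Bmax_ge beta L d Hd) as [_ HBm].
  assert (HK : 0 < Kl beta L d) by (unfold Kl; apply Rdiv_lt_0_compat; lra).
  assert (HKu : 0 < Ku beta) by apply rp_pos.
  assert (Hup : u b k - u a k <= Ku beta * Rpower (b - a) (gg beta)).
  { destruct (Req_dec a 0) as [->|Ha]; [|apply (up_pos beta u0 delta); auto; lra].
    apply (lim0_hi (fun s => u s k) b); [lra|apply (sol_cont0 beta _ u k b Hs); lra|].
    intros s Hs'. pose proof (up_pos beta u0 delta u k s b Hb Hdl Hs Hbd ltac:(lra)).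
    assert (Rpower (b - s) (gg beta) <= Rpower (b - 0) (gg beta)) by (apply rp_mono_pos; lra).
    nra. }
  assert (Hlo : - Kl beta L d * Rpower (b - a) (gg beta) <= u b k - u a k).
  { destruct (Req_dec a 0) as [->|Ha]; [|apply (lo_pos beta L d u0 delta); auto; lra].
    apply (lim0_lo (fun s => u s k) b); [lra|apply (sol_cont0 beta _ u k b Hs); lra|].
    intros s Hs'. pose proof (lo_pos beta L d u0 delta u k s b Hb Hd HP Hdl Hs Hbd ltac:(lra) Hbt).
    assert (Rpower (b - s) (gg beta) <= Rpower (b - 0) (gg beta)) by (apply rp_mono_pos; lra).
    nra. }
  pose proof (rp_pos (b - a) (gg beta)).
  apply Rabs_le. split; nra.
Qed.

Theorem corollaryA11 (beta : R) (L : nat) (d : R) :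
  beta < 0 -> 0 < d ->
  exists tstar C : R, 0 < tstar /\
    forall (u0 : zseq), PLd L d u0 ->
    forall (delta : R), 0 < delta ->
    forall (u : R -> zseq),
      is_solution beta (fun k => Rmax (u0 k) delta) u ->
      (forall t k, 0 <= t ->
         delta <= u t k <= supnorm (fun j => Rmax (u0 j) delta)) ->
      forall t1 t2 k, 0 <= t1 <= tstar -> 0 <= t2 <= tstar ->
        Rabs (u t2 k - u t1 k) <= C * hpow (Rabs (t2 - t1)) (1 / (1 - beta)).
Proof.
  intros Hb Hd.
  exists (tst beta L d), (Ku beta + Kl beta L d).
  split; [apply (tst_pos beta L d Hb Hd)|].
  intros u0 HP delta Hdl u Hs Hbd0 t1 t2 k Ht1 Ht2.
  assert (Hbd : forall t k, 0 <= t -> delta <= u t k) by (intros; apply Hbd0; auto).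
  change (1 / (1 - beta)) with (gg beta).
  unfold hpow.
  destruct (Rtotal_order t1 t2) as [Hlt|[Heq|Hgt]].
  - rewrite (Rabs_right (t2 - t1)) by lra. destruct (Rle_dec (t2 - t1) 0); [lra|].
    apply (holder beta L d u0 delta); auto; lra.
  - subst. replace (u t2 k - u t2 k) with 0 by ring. rewrite Rabs_R0.
    destruct (Rle_dec (Rabs (t2 - t2)) 0); [lra|].
    exfalso. apply n. replace (t2 - t2) with 0 by ring. rewrite Rabs_R0. lra.
  - rewrite Rabs_minus_sym. rewrite (Rabs_left (t2 - t1)) by lra.
    destruct (Rle_dec (- (t2 - t1)) 0); [lra|].
    replace (- (t2 - t1)) with (t1 - t2) by ring.
    apply (holder beta L d u0 delta); auto; lra.
Qed.
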